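(* Under the standing assumptions, writing (R2) for the condition $\mathscr{R}(CC^*B^* )=\mathscr{R}(B^* )$, the following hold. (41) $\{M^{(1,2,4)}\}\subseteq\{C^{-1}B^{(1)}A^{-1}\}$; and $\{M^{(1,2,4)}\}\supseteq\{C^{-1}B^{(1)}A^{-1}\}\Leftrightarrow\{M^{(1,2,4)}\}=\{C^{-1}B^{(1)}A^{-1}\}\Leftrightarrow r(B)=n$. (42) $\{M^{(1,2,4)}\}\subseteq\{C^{-1}B^{(1,2)}A^{-1}\}$; and $\{M^{(1,2,4)}\}\supseteq\{C^{-1}B^{(1,2)}A^{-1}\}\Leftrightarrow\{M^{(1,2,4)}\}=\{C^{-1}B^{(1,2)}A^{-1}\}\Leftrightarrow B=0$ or $r(B)=n$. (43) $\{M^{(1,2,4)}\}\cap\{C^{-1}B^{(1,3)}A^{-1}\}\neq\emptyset$; $\{M^{(1,2,4)}\}\supseteq\{C^{-1}B^{(1,3)}A^{-1}\}\Leftrightarrow r(B)=n$; $\{M^{(1,2,4)}\}\subseteq\{C^{-1}B^{(1,3)}A^{-1}\}\Leftrightarrow B=0$ or $r(B)=m$; $\{M^{(1,2,4)}\}=\{C^{-1}B^{(1,3)}A^{-1}\}\Leftrightarrow r(B)=m=n$. (44) $\{M^{(1,2,4)}\}\cap\{C^{-1}B^{(1,4)}A^{-1}\}\neq\emptyset\Leftrightarrow\{M^{(1,2,4)}\}\subseteq\{C^{-1}B^{(1,4)}A^{-1}\}\Leftrightarrow$ (R2); and $\{M^{(1,2,4)}\}\supseteq\{C^{-1}B^{(1,4)}A^{-1}\}\Leftrightarrow\{M^{(1,2,4)}\}=\{C^{-1}B^{(1,4)}A^{-1}\}\Leftrightarrow$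 (R2) and $r(B)=\min\{m,n\}$. (45) $\{M^{(1,2,4)}\}\cap\{C^{-1}B^{(1,2,3)}A^{-1}\}\neq\emptyset$; $\{M^{(1,2,4)}\}\supseteq\{C^{-1}B^{(1,2,3)}A^{-1}\}\Leftrightarrow B=0$ or $r(B)=n$; $\{M^{(1,2,4)}\}\subseteq\{C^{-1}B^{(1,2,3)}A^{-1}\}\Leftrightarrow B=0$ or $r(B)=m$; $\{M^{(1,2,4)}\}=\{C^{-1}B^{(1,2,3)}A^{-1}\}\Leftrightarrow B=0$ or $r(B)=m=n$. (46) $\{M^{(1,2,4)}\}\cap\{C^{-1}B^{(1,2,4)}A^{-1}\}\neq\emptyset\Leftrightarrow\{M^{(1,2,4)}\}=\{C^{-1}B^{(1,2,4)}A^{-1}\}\Leftrightarrow$ (R2). (47) $\{M^{(1,2,4)}\}\cap\{C^{-1}B^{(1,3,4)}A^{-1}\}\neq\emptyset\Leftrightarrow$ (R2); $\{M^{(1,2,4)}\}\supseteq\{C^{-1}B^{(1,3,4)}A^{-1}\}\Leftrightarrow$ (R2) and $r(B)=\min\{m,n\}$; $\{M^{(1,2,4)}\}\subseteq\{C^{-1}B^{(1,3,4)}A^{-1}\}\Leftrightarrow B=0$ or ((R2) and $r(B)=m$); $\{M^{(1,2,4)}\}=\{C^{-1}B^{(1,3,4)}A^{-1}\}\Leftrightarrow$ (R2) and $r(B)=m$. (48) $C^{-1}B^\dagger A^{-1}\in\{M^{(1,2,4)}\}\Leftrightarrow$ (R2).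
   Context: Standing assumptions: $m,n\ge1$; $A\in\mathbb{C}^{m\times m}$ and $C\in\mathbb{C}^{n\times n}$ are nonsingular; $B\in\mathbb{C}^{m\times n}$; $M=ABC$. For a complex matrix $X$, $X^*$ is its conjugate transpose, $r(X)$ its rank and $\mathscr{R}(X)$ its column space. For $X\in\mathbb{C}^{p\times q}$, a matrix $G\in\mathbb{C}^{q\times p}$ is called an $\{i,\ldots,j\}$-generalized inverse of $X$ (written $X^{(i,\ldots,j)}$) if it satisfies the equations numbered $i,\ldots,j$ among the four Penrose equations (i) $XGX=X$, (ii) $GXG=G$, (iii) $(XG)^*=XG$, (iv) $(GX)^*=GX$; $\{X^{(i,\ldots,j)}\}$ denotes the set of all such $G$. The Moore–Penrose inverse $X^\dagger$ is the unique matrix satisfying all four equations. For a type $(k,\ldots,l)$, $\{C^{-1}B^{(k,\ldots,l)}A^{-1}\}:=\{C^{-1}GA^{-1}: G\in\{B^{(k,\ldots,l)}\}\}$. *)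

(* Defs.v *)
(* Complex matrices are modelled over an arbitrary
   numClosedFieldType F (algebraically closed field with conjugation and
   order, e.g. algC or C itself). *)
From HB Require Import structures.
From mathcomp Require Import all_boot all_order all_algebra.
From Stdlib Require Import ClassicalEpsilon.
Set Implicit Arguments. Unset Strict Implicit. Unset Printing Implicit Defensive.
Import Order.TTheory GRing.Theory Num.Theory.
Local Open Scope ring_scope.

Section Defs.
Variable F : numClosedFieldType.

Definition ctr (p q : nat) (X : 'M[F]_(p, q)) : 'M[F]_(q, p) :=
  (map_mx (fun x : F => x^*) X)^T.

(* Column space equality R(X) = R(Y): column space of X is the row space of X^T *)
Definition colspace_eq (p q r : nat) (X : 'M[F]_(p, q)) (Y : 'M[F]_(p, r)) : Prop :=
  (X^T == Y^T)%MS.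

Definition penrose (i : nat) (p q : nat) (X : 'M[F]_(p, q)) (G : 'M[F]_(q, p)) : Prop :=
  match i with
  | 1 => X *m G *m X = X
  | 2 => G *m X *m G = G
  | 3 => ctr (X *m G) = X *m G
  | 4 => ctr (G *m X) = G *m X
  | _ => True
  end.

Definition ginv (t : seq nat) (p q : nat) (X : 'M[F]_(p, q)) (G : 'M[F]_(q, p)) : Prop :=
  forall i, i \in t -> penrose i X G.

Definition mpinv (p q : nat) (X : 'M[F]_(p, q)) : 'M[F]_(q, p) :=
  epsilon (inhabits 0) (fun G => ginv [:: 1; 2; 3; 4]%N X G).

Definition tset (t : seq nat) (m n : nat) (A : 'M[F]_m) (B : 'M[F]_(m, n)) (C : 'M[F]_n)
  (H : 'M[F]_(n, m)) : Prop :=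
  exists G, ginv t B G /\ H = invmx C *m G *m invmx A.

Definition msubset (p q : nat) (S T : 'M[F]_(p, q) -> Prop) : Prop :=
  forall X, S X -> T X.
Definition mseteq (p q : nat) (S T : 'M[F]_(p, q) -> Prop) : Prop :=
  forall X, S X <-> T X.
Definition mmeets (p q : nat) (S T : 'M[F]_(p, q) -> Prop) : Prop :=
  exists X, S X /\ T X.

End Defs.

(* Main.v *)
Require Import Defs.
From HB Require Import structures.
From mathcomp Require Import all_boot all_order all_algebra.
From mathcomp Require Import zify.
From Stdlib Require Import ClassicalEpsilon Classical.
Set Implicit Arguments. Unset Strict Implicit. Unset Printing Implicit Defensive.
Import Order.TTheory GRing.Theory Num.Theory.
Local Open Scope ring_scope.

Section Ctr.
Variable F : numClosedFieldType.

Lemma ctrM (p q r : nat) (X : 'M[F]_(p, q)) (Y : 'M[F]_(q, r)) :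
  ctr (X *m Y) = ctr Y *m ctr X.
Proof. by rewrite /ctr map_mxM trmx_mul. Qed.

Lemma ctrK (p q : nat) (X : 'M[F]_(p, q)) : ctr (ctr X) = X.
Proof.
apply/matrixP=> i j; rewrite /ctr !mxE conjCK //.
Qed.

Lemma ctrD (p q : nat) (X Y : 'M[F]_(p, q)) : ctr (X + Y) = ctr X + ctr Y.
Proof. by rewrite /ctr map_mxD linearD. Qed.

Lemma ctrN (p q : nat) (X : 'M[F]_(p, q)) : ctr (- X) = - ctr X.
Proof. by rewrite /ctr map_mxN linearN. Qed.

Lemma ctrB (p q : nat) (X Y : 'M[F]_(p, q)) : ctr (X - Y) = ctr X - ctr Y.
Proof. by rewrite ctrD ctrN. Qed.

Lemma ctr0 (p q : nat) : ctr (0 : 'M[F]_(p, q)) = 0.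
Proof. by rewrite /ctr map_mx0 trmx0. Qed.

Lemma ctr1 (p : nat) : ctr (1%:M : 'M[F]_p) = 1%:M.
Proof. by rewrite /ctr map_mx1 trmx1. Qed.

Lemma ctrZ (p q : nat) (a : F) (X : 'M[F]_(p, q)) : ctr (a *: X) = a^* *: ctr X.
Proof. by rewrite /ctr map_mxZ linearZ. Qed.

Lemma ctr_inv (p : nat) (X : 'M[F]_p) : ctr (invmx X) = invmx (ctr X).
Proof. by rewrite /ctr map_invmx trmx_inv. Qed.

Lemma ctr_unit (p : nat) (X : 'M[F]_p) : (ctr X \in unitmx) = (X \in unitmx).
Proof. by rewrite /ctr unitmx_tr map_unitmx. Qed.

Lemma ctr_rank (p q : nat) (X : 'M[F]_(p, q)) : \rank (ctr X) = \rank X.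
Proof. by rewrite /ctr mxrank_tr mxrank_map. Qed.

Lemma psd0 (p q : nat) (X : 'M[F]_(p, q)) : X *m ctr X = 0 -> X = 0.
Proof.
move=> H; apply/matrixP=> i j.
have := congr1 (fun Z : 'M[F]_p => Z i i) H.
rewrite !mxE => /eqP.
have E : \sum_j0 X i j0 * ctr X j0 i = \sum_j0 `|X i j0| ^+ 2.
  by apply: eq_bigr => k _; rewrite /ctr !mxE normCK.
rewrite E psumr_eq0; last by move=> k _; rewrite exprn_ge0.
move=> /allP /(_ j (mem_index_enum _)) /=.
by rewrite sqrf_eq0 normr_eq0 => /eqP ->; rewrite ?mxE.
Qed.

Lemma gram_unit (r q : nat) (G : 'M[F]_(r, q)) : row_free G -> G *m ctr G \in unitmx.
Proof.
move=> fG; rewrite -row_free_unit -kermx_eq0; apply/eqP.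
set K := kermx _.
have HK : K *m (G *m ctr G) = 0 by apply/sub_kermxP.
have : (K *m G) *m ctr (K *m G) = 0.
  by rewrite ctrM !mulmxA -(mulmxA K) HK mul0mx.
move/psd0/eqP; rewrite mulmx_free_eq0 //; exact/eqP.
Qed.

Lemma mp_factor (p q r : nat) (Fm : 'M[F]_(p, r)) (Gm : 'M[F]_(r, q)) :
  row_free Gm -> row_free (ctr Fm) -> exists G, ginv [:: 1; 2; 3; 4]%N (Fm *m Gm) G.
Proof.
move=> fG fF.
have uG := gram_unit fG.
have uF0 := gram_unit fF; rewrite ctrK in uF0.
set SG := invmx (Gm *m ctr Gm); set SF := invmx (ctr Fm *m Fm).
have hSG : ctr SG = SG by rewrite /SG ctr_inv ctrM ctrK.
have hSF : ctr SF = SF by rewrite /SF ctr_inv ctrM ctrK.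
exists (ctr Gm *m SG *m SF *m ctr Fm).
have KG : (Fm *m Gm) *m (ctr Gm *m SG *m SF *m ctr Fm) = Fm *m SF *m ctr Fm.
  by rewrite !mulmxA -(mulmxA Fm Gm) /SG (mulmxK uG).
have GK : (ctr Gm *m SG *m SF *m ctr Fm) *m (Fm *m Gm) = ctr Gm *m SG *m Gm.
  by rewrite !mulmxA -(mulmxA _ (ctr Fm) Fm) /SF (mulmxKV uF0).
move=> i; rewrite !inE => /or4P [] /eqP -> /=.
- by rewrite KG !mulmxA -(mulmxA _ (ctr Fm) Fm) /SF (mulmxKV uF0).
- by rewrite GK !mulmxA -(mulmxA _ Gm (ctr Gm)) /SG (mulmxKV uG).
- by rewrite KG !ctrM ctrK hSF mulmxA.
- by rewrite GK !ctrM ctrK hSG mulmxA.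
Qed.

Lemma mp_exists (p q : nat) (K : 'M[F]_(p, q)) : exists G, ginv [:: 1; 2; 3; 4]%N K G.
Proof.
rewrite -(mulmx_base K); apply: mp_factor; first exact: row_base_free.
by rewrite /row_free ctr_rank; apply: col_base_full.
Qed.

Lemma mpinvP (p q : nat) (K : 'M[F]_(p, q)) : ginv [:: 1; 2; 3; 4]%N K (mpinv K).
Proof.
rewrite /mpinv; case: (mp_exists K) => G HG.
by apply: (@epsilon_spec _ (inhabits 0) (fun G => ginv [:: 1; 2; 3; 4]%N K G)); exists G.
Qed.

End Ctr.

Section Lin.
Variable F : numClosedFieldType.

Lemma entry_delta (s t u v : nat) (E : 'M[F]_(s, t)) (G : 'M[F]_(u, v)) a b c d :
  (E *m delta_mx b c *m G) a d = E a b * G c d.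
Proof.
rewrite !mxE (bigD1 c) //= big1 ?addr0; last first.
  move=> k kc; rewrite !mxE big1 ?mul0r // => l _; rewrite mxE.
  by rewrite (negbTE kc) andbF mulr0.
rewrite !mxE (bigD1 b) //= big1 ?addr0; last first.
  by move=> l lb; rewrite mxE (negbTE lb) mulr0.
by rewrite mxE !eqxx mulr1.
Qed.

Lemma outer0 (s t u v : nat) (E : 'M[F]_(s, t)) (G : 'M[F]_(u, v)) :
  (forall Z, E *m Z *m G = 0) -> E = 0 \/ G = 0.
Proof.
move=> H; case: (eqVneq E 0) => [->|]; first by left.
case/matrix0Pn => a [b Eab]; right; apply/matrixP => c d.
have := congr1 (fun Z : 'M[F]_(s, v) => Z a d) (H (delta_mx b c)).
rewrite entry_delta mxE => /eqP; rewrite mulf_eq0 (negbTE Eab) /= => /eqP ->.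
by rewrite mxE.
Qed.

Lemma herm_lin (s t u : nat) (K0 : 'M[F]_s) (E : 'M[F]_(s, t)) (G : 'M[F]_(u, s)) :
  (forall Z, ctr (K0 + E *m Z *m G) = K0 + E *m Z *m G) -> E = 0 \/ G = 0.
Proof.
move=> H; apply: outer0 => Z.
have H0 := H 0; rewrite mulmx0 mul0mx addr0 in H0.
have hS : forall Z, ctr (E *m Z *m G) = E *m Z *m G.
  by move=> Z0; have := H Z0; rewrite ctrD H0 => /addrI.
have := hS ('i *: Z); rewrite -scalemxAr -scalemxAl ctrZ hS conjCi.
move=> /eqP; rewrite scaleNr eq_sym -subr_eq0 opprK -scalerDl scaler_eq0 => /orP [].
  by rewrite -mulr2n mulrn_eq0 (negbTE (neq0Ci F)).
by move/eqP.
Qed.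

End Lin.

Section MP.
Variable F : numClosedFieldType.
Variables (p q : nat) (K : 'M[F]_(p, q)) (Kd : 'M[F]_(q, p)).
Hypotheses (k1 : K *m Kd *m K = K) (k2 : Kd *m K *m Kd = Kd)
  (k3 : ctr (K *m Kd) = K *m Kd) (k4 : ctr (Kd *m K) = Kd *m K).

Lemma G1 (Y : 'M[F]_(q, p)) : K *m Y *m K = K -> ctr (Y *m K) = Y *m K ->
  Y *m K = Kd *m K.
Proof.
move=> h1 h4.
have e : Kd *m K = Kd *m K *m (Y *m K) by rewrite -[in LHS]h1 !mulmxA.
rewrite e; have -> : Kd *m K *m (Y *m K) = ctr (Y *m K *m (Kd *m K)) by rewrite ctrM k4 h4.
by rewrite -mulmxA (mulmxA K Kd K) k1 h4.
Qed.

Lemma G2 (Y : 'M[F]_(q, p)) : K *m Y *m K = K -> ctr (K *m Y) = K *m Y ->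
  K *m Y = K *m Kd.
Proof.
move=> h1 h3.
have e : K *m Kd = K *m Y *m (K *m Kd) by rewrite -[in LHS]h1 !mulmxA.
rewrite e; have -> : K *m Y *m (K *m Kd) = ctr (K *m Kd *m (K *m Y)) by rewrite ctrM k3 h3.
by rewrite mulmxA k1 h3.
Qed.

Lemma idem_unit (r : nat) (P : 'M[F]_r) : P *m P = P -> P \in unitmx -> P = 1%:M.
Proof. by move=> e u; rewrite -(mulmxK u P) e mulmxV. Qed.

Lemma rank_q : \rank K = q <-> Kd *m K = 1%:M.
Proof.
split=> [h|h].
  apply: idem_unit; first by rewrite mulmxA k2.
  rewrite -row_free_unit /row_free; apply/eqP/anti_leq.
  rewrite rank_leq_col /= -{1}h -{1}k1 -mulmxA; exact: mxrankM_maxr.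
apply/anti_leq; rewrite rank_leq_col /= -{1}(mxrank1 F q) -h.
exact: mxrankM_maxr.
Qed.

Lemma rank_p : \rank K = p <-> K *m Kd = 1%:M.
Proof.
split=> [h|h].
  apply: idem_unit; first by rewrite mulmxA k1.
  rewrite -row_free_unit /row_free; apply/eqP/anti_leq.
  rewrite rank_leq_row /= -{1}h -{1}k1; exact: mxrankM_maxl.
apply/anti_leq; rewrite rank_leq_row /= -{1}(mxrank1 F p) -h.
exact: mxrankM_maxl.
Qed.

Lemma KP : K *m (Kd *m K) = K. Proof. by rewrite mulmxA k1. Qed.
Lemma QK : K *m Kd *m K = K. Proof. exact: k1. Qed.
Lemma PKd : Kd *m K *m Kd = Kd. Proof. exact: k2. Qed.
Lemma KdQ : Kd *m (K *m Kd) = Kd. Proof. by rewrite mulmxA k2. Qed.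
Lemma PP : Kd *m K *m (Kd *m K) = Kd *m K. Proof. by rewrite mulmxA k2. Qed.
Lemma QQ : K *m Kd *m (K *m Kd) = K *m Kd. Proof. by rewrite mulmxA k1. Qed.
Lemma KIP : K *m (1%:M - Kd *m K) = 0. Proof. by rewrite mulmxBr mulmx1 KP subrr. Qed.
Lemma IQK : (1%:M - K *m Kd) *m K = 0. Proof. by rewrite mulmxBl mul1mx QK subrr. Qed.
Lemma PIP : Kd *m K *m (1%:M - Kd *m K) = 0. Proof. by rewrite mulmxBr mulmx1 PP subrr. Qed.
Lemma IQQ : (1%:M - K *m Kd) *m (K *m Kd) = 0. Proof. by rewrite mulmxBl mul1mx QQ subrr. Qed.

Lemma Kd0 : K = 0 -> Kd = 0.
Proof. by move=> e; rewrite -k2 e mulmx0 mul0mx. Qed.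

Lemma CE_a4 : K != 0 -> \rank K != q -> exists Y : 'M[F]_(q, p),
  K *m Y *m K = K /\ Y *m K *m Y = Y /\ ctr (K *m Y) = K *m Y /\ ~ (ctr (Y *m K) = Y *m K).
Proof.
move=> nK nr; apply: NNPP => H.
pose Y Z := Kd + (1%:M - Kd *m K) *m Z *m (K *m Kd).
have KY : forall Z, K *m Y Z = K *m Kd.
  by move=> Z; rewrite /Y [LHS]mulmxDr !mulmxA KIP !mul0mx addr0.
have YK : forall Z, Y Z *m K = Kd *m K + (1%:M - Kd *m K) *m Z *m K.
  by move=> Z; rewrite /Y [LHS]mulmxDl -(mulmxA _ (K *m Kd) K) QK.
have : forall Z : 'M[F]_(q, p), ctr (Kd *m K + (1%:M - Kd *m K) *m Z *m K) = Kd *m K + (1%:M - Kd *m K) *m Z *m K.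
  move=> Z; rewrite -YK; apply: NNPP => H4; apply: H; exists (Y Z).
  split; first by rewrite KY QK.
  split; first by rewrite -mulmxA KY /Y [LHS]mulmxDl KdQ -(mulmxA _ (K *m Kd) (K *m Kd)) QQ.
  by rewrite KY.
case/herm_lin => [/eqP|e]; last by rewrite e eqxx in nK.
rewrite subr_eq0 => /eqP e; move/negP: nr; apply; apply/eqP.
by apply/rank_q; rewrite -e.
Qed.

Lemma CE_a3 : K != 0 -> \rank K != p -> exists Y : 'M[F]_(q, p),
  K *m Y *m K = K /\ Y *m K *m Y = Y /\ ctr (Y *m K) = Y *m K /\ ~ (ctr (K *m Y) = K *m Y).
Proof.
move=> nK nr; apply: NNPP => H.
pose Y Z := Kd + (Kd *m K) *m Z *m (1%:M - K *m Kd).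
have YK : forall Z, Y Z *m K = Kd *m K.
  by move=> Z; rewrite /Y [LHS]mulmxDl -!mulmxA IQK !mulmx0 addr0.
have KY : forall Z, K *m Y Z = K *m Kd + K *m Z *m (1%:M - K *m Kd).
  by move=> Z; rewrite /Y [LHS]mulmxDr !mulmxA k1.
have : forall Z : 'M[F]_(q, p), ctr (K *m Kd + K *m Z *m (1%:M - K *m Kd)) = K *m Kd + K *m Z *m (1%:M - K *m Kd).
  move=> Z; rewrite -KY; apply: NNPP => H3; apply: H; exists (Y Z).
  split; first by rewrite -mulmxA YK KP.
  split; first by rewrite YK /Y [LHS]mulmxDr PKd !mulmxA k2.
  by rewrite YK k4.
case/herm_lin => [e|/eqP]; first by rewrite e eqxx in nK.
rewrite subr_eq0 => /eqP e; move/negP: nr; apply; apply/eqP.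
by apply/rank_p; rewrite -e.
Qed.

Lemma CE_a2 : \rank K != p -> \rank K != q -> exists Y : 'M[F]_(q, p),
  K *m Y *m K = K /\ ctr (K *m Y) = K *m Y /\ Y *m K = Kd *m K /\ ~ (Y *m K *m Y = Y).
Proof.
move=> np nq; apply: NNPP => H.
pose Y Z := Kd + (1%:M - Kd *m K) *m Z *m (1%:M - K *m Kd).
have YK : forall Z, Y Z *m K = Kd *m K.
  by move=> Z; rewrite /Y [LHS]mulmxDl -!mulmxA IQK !mulmx0 addr0.
have KY : forall Z, K *m Y Z = K *m Kd.
  by move=> Z; rewrite /Y [LHS]mulmxDr !mulmxA KIP !mul0mx addr0.
have : forall Z : 'M[F]_(q, p), (1%:M - Kd *m K) *m Z *m (1%:M - K *m Kd) = 0.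
  move=> Z; apply: NNPP => H2; apply: H; exists (Y Z).
  split; first by rewrite KY QK.
  split; first by rewrite KY.
  split; first exact: YK.
  move=> e.
  have e2 : Y Z *m K *m Y Z = Kd by rewrite YK /Y (mulmxDr (Kd *m K)) PKd !mulmxA PIP !mul0mx addr0.
  have e3 : Kd + (1%:M - Kd *m K) *m Z *m (1%:M - K *m Kd) = Kd + 0 by rewrite addr0 -[in RHS]e2 e.
  by apply: H2; move/addrI: e3.
case/outer0 => /eqP; rewrite subr_eq0 => /eqP e.
  by move/negP: nq; apply; apply/eqP/rank_q; rewrite -e.
by move/negP: np; apply; apply/eqP/rank_p; rewrite -e.
Qed.

End MP.

Section Cancel.
Variable F : numClosedFieldType.
Lemma cancel_l (r s : nat) (U : 'M[F]_r) (X Y : 'M[F]_(r, s)) :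
  U \in unitmx -> U *m X = U *m Y -> X = Y.
Proof. by move=> u e; rewrite -(mulKmx u X) e mulKmx. Qed.
Lemma cancel_r (r s : nat) (U : 'M[F]_s) (X Y : 'M[F]_(r, s)) :
  U \in unitmx -> X *m U = Y *m U -> X = Y.
Proof. by move=> u e; rewrite -(mulmxK u X) e mulmxK. Qed.
Lemma gFC (p q : nat) (K : 'M[F]_(p, q)) Kd Y : K *m Y *m K = K -> Kd *m K = 1%:M -> Y *m K = 1%:M.
Proof. by move=> h e; rewrite -e -[LHS]mul1mx -e -mulmxA (mulmxA K) h. Qed.
Lemma gFR (p q : nat) (K : 'M[F]_(p, q)) Kd Y : K *m Y *m K = K -> K *m Kd = 1%:M -> K *m Y = 1%:M.
Proof. by move=> h e; rewrite -e -[LHS]mulmx1 -e mulmxA h. Qed.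
End Cancel.

Section Main.
Variable F : numClosedFieldType.
Variables (m n : nat) (hm : (1 <= m)%N) (hn : (1 <= n)%N).
Variables (A : 'M[F]_m) (B : 'M[F]_(m, n)) (C : 'M[F]_n).
Hypotheses (hA : A \in unitmx) (hC : C \in unitmx).
Local Notation N := (B *m C).
Variable Nd : 'M[F]_(n, m).
Hypotheses (n1 : N *m Nd *m N = N) (n2 : Nd *m N *m Nd = Nd)
  (n3 : ctr (N *m Nd) = N *m Nd) (n4 : ctr (Nd *m N) = Nd *m N).
Variable Bd : 'M[F]_(n, m).
Hypotheses (b1 : B *m Bd *m B = B) (b2 : Bd *m B *m Bd = Bd)
  (b3 : ctr (B *m Bd) = B *m Bd) (b4' : ctr (Bd *m B) = Bd *m B).

Definition a1 (Y : 'M[F]_(n, m)) := N *m Y *m N = N.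
Definition a2 (Y : 'M[F]_(n, m)) := Y *m N *m Y = Y.
Definition a3 (Y : 'M[F]_(n, m)) := ctr (N *m Y) = N *m Y.
Definition a4 (Y : 'M[F]_(n, m)) := ctr (Y *m N) = Y *m N.
Definition b4 (Y : 'M[F]_(n, m)) :=
  ctr (C *m (Y *m N) *m invmx C) = C *m (Y *m N) *m invmx C.
Definition RR := b4 Nd.
Definition Y0 := invmx C *m Bd.

Lemma rankN : \rank N = \rank B.
Proof. by rewrite mxrankMfree // row_free_unit. Qed.

Lemma N0E : N = 0 <-> B = 0.
Proof.
split=> [e|->]; last by rewrite mul0mx.
by rewrite -(mulmxK hC B) e mul0mx.
Qed.

Lemma a1B (Y : 'M[F]_(n, m)) : a1 Y -> B *m (C *m Y) *m B = B.
Proof.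
move=> h; apply: (cancel_r hC); by rewrite !mulmxA -[in RHS]h !mulmxA.
Qed.

Lemma b4P (Y : 'M[F]_(n, m)) : a1 Y -> b4 Y -> C *m (Y *m N) *m invmx C = Bd *m B.
Proof.
move=> h1 h4.
have e : C *m (Y *m N) *m invmx C = C *m Y *m B.
  by rewrite !mulmxA (mulmxK hC).
rewrite e; apply: (G1 b1 b4' (a1B h1)).
by rewrite -e.
Qed.

Lemma uniqR (Y : 'M[F]_(n, m)) : RR -> a1 Y -> b4 Y -> Y *m N = Nd *m N.
Proof.
move=> R h1 h4; have e1 := b4P h1 h4.
have e2 := b4P n1 R.
apply: (cancel_l hC); apply: (@cancel_r _ _ _ (invmx C)); first by rewrite unitmx_inv.
by rewrite e1 e2.
Qed.

Lemma b4_YN (Y : 'M[F]_(n, m)) : Y *m N = Nd *m N -> RR -> b4 Y.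
Proof. by rewrite /b4 => ->. Qed.
Lemma a4_YN (Y : 'M[F]_(n, m)) : Y *m N = Nd *m N -> a4 Y.
Proof. by rewrite /a4 => ->. Qed.
Lemma G1N (Y : 'M[F]_(n, m)) : a1 Y -> a4 Y -> Y *m N = Nd *m N.
Proof. move=> h1 h4; exact: (G1 n1 n4 h1 h4). Qed.

Lemma Y0N : Y0 *m N = invmx C *m (Bd *m B) *m C.
Proof. by rewrite /Y0 !mulmxA. Qed.
Lemma a1Y0 : a1 Y0.
Proof. by rewrite /a1 /Y0 !mulmxA (mulmxK hC) b1. Qed.
Lemma a2Y0 : a2 Y0.
Proof. by rewrite /a2 /Y0 !mulmxA (mulmxK hC) -(mulmxA _ Bd B) -(mulmxA _ (Bd *m B) Bd) b2. Qed.
Lemma a3Y0 : a3 Y0.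
Proof. by rewrite /a3 /Y0 mulmxA -(mulmxA B) mulmxV // mulmx1 b3. Qed.
Lemma b4Y0 : b4 Y0.
Proof.
rewrite /b4 Y0N !mulmxA mulmxV // mul1mx (mulmxK hC).
exact: b4'.
Qed.

Lemma R_b4' : RR <-> ctr (invmx C *m (Bd *m B) *m C) = invmx C *m (Bd *m B) *m C.
Proof.
split=> [R|h].
  have e2 := b4P n1 R.
  have -> : invmx C *m (Bd *m B) *m C = Nd *m N.
    by rewrite -e2 !mulmxA (mulVmx hC) mul1mx (mulmxKV hC).
  exact: n4.
have e : Y0 *m N = Nd *m N by apply: G1N; [exact: a1Y0 | rewrite /a4 Y0N].
rewrite /RR /b4 -e Y0N.
rewrite !mulmxA mulmxV // mul1mx (mulmxK hC). exact: b4'.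
Qed.

Lemma m124Y0 : (a1 Y0 /\ a2 Y0 /\ a4 Y0) <-> RR.
Proof.
rewrite R_b4'; split=> [[_ [_ h]]|h]; first by rewrite /a4 Y0N in h.
by split; [exact: a1Y0 | split; [exact: a2Y0 | rewrite /a4 Y0N]].
Qed.


Lemma ctrV : ctr (C *m ctr C) = C *m ctr C.
Proof. by rewrite ctrM ctrK. Qed.
Lemma PBs : Bd *m B *m ctr B = ctr B.
Proof. by rewrite -{1}b4' -ctrM mulmxA b1. Qed.
Lemma PE : Bd *m B = ctr B *m ctr Bd.
Proof. by rewrite -{1}b4' ctrM. Qed.

Lemma VPE : (C *m ctr C) *m (Bd *m B) = (Bd *m B) *m (C *m ctr C) <->
  ctr (invmx C *m (Bd *m B) *m C) = invmx C *m (Bd *m B) *m C.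
Proof.
have uC' : ctr C \in unitmx by rewrite ctr_unit.
rewrite ctrM (ctrM (invmx C)) b4' ctr_inv.
split=> h.
  apply: (cancel_l hC); apply: (cancel_r uC').
  rewrite !mulmxA (mulmxKV uC') mulmxV // mul1mx.
  by rewrite -(mulmxA (C *m ctr C)) h !mulmxA.
have := congr1 (fun X => C *m X *m ctr C) h.
rewrite !mulmxA (mulmxKV uC') mulmxV // mul1mx -!mulmxA => ->.
by rewrite !mulmxA.
Qed.

Lemma R2VP : colspace_eq (C *m ctr C *m ctr B) (ctr B) <->
  (C *m ctr C) *m (Bd *m B) = (Bd *m B) *m (C *m ctr C).
Proof.
split.
  rewrite /colspace_eq => /andP [/submxP [D eD] _].
  have eV : C *m ctr C *m ctr B = ctr B *m D^T.
    by rewrite -(trmxK (C *m ctr C *m ctr B)) eD trmx_mul trmxK.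
  have e1 : C *m ctr C *m (Bd *m B) = ctr B *m D^T *m ctr Bd.
    by rewrite {1}PE mulmxA eV.
  have e2 : Bd *m B *m (C *m ctr C *m (Bd *m B)) = C *m ctr C *m (Bd *m B).
    by rewrite e1 !mulmxA PBs.
  have -> : Bd *m B *m (C *m ctr C) = ctr (C *m ctr C *m (Bd *m B)).
    by rewrite ctrM ctrV b4'.
  rewrite -e2 ctrM (ctrM (C *m ctr C)) ctrV b4'.
  by rewrite !mulmxA.
move=> h.
have eV : C *m ctr C *m ctr B = ctr B *m (ctr Bd *m (C *m ctr C) *m ctr B).
  by rewrite -{1}PBs mulmxA h PE !mulmxA.
have sub : ((C *m ctr C *m ctr B)^T <= (ctr B)^T)%MS.
  by rewrite eV trmx_mul submxMl.
rewrite /colspace_eq /eqmx sub /= -(mxrank_leqif_sup sub).2.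
rewrite trmx_mul mxrankMfree //.
by rewrite row_free_unit unitmx_tr unitmx_mul hC ctr_unit hC.
Qed.

Lemma R2R : colspace_eq (C *m ctr C *m ctr B) (ctr B) <-> RR.
Proof. by rewrite R2VP VPE R_b4'. Qed.

Local Notation r := (\rank N).
Lemma rle_m : (r <= m)%N. Proof. exact: rank_leq_row. Qed.
Lemma rle_n : (r <= n)%N. Proof. exact: rank_leq_col. Qed.

Lemma FC (Y : 'M[F]_(n, m)) : a1 Y -> r = n -> Y *m N = 1%:M.
Proof.
move=> h /(rank_q n1 n2) e; exact: gFC h e.
Qed.
Lemma FR (Y : 'M[F]_(n, m)) : a1 Y -> r = m -> N *m Y = 1%:M.
Proof.
move=> h /(rank_p n1) e; exact: gFR h e.
Qed.
Lemma a2_of (Y : 'M[F]_(n, m)) : a1 Y -> r = n \/ r = m -> a2 Y.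
Proof.
move=> h [e|e].
  by rewrite /a2 (FC h e) mul1mx.
by rewrite /a2 -mulmxA (FR h e) mulmx1.
Qed.
Lemma FC4 (Y : 'M[F]_(n, m)) : a1 Y -> r = n -> a4 Y /\ b4 Y.
Proof.
move=> h e; rewrite /a4 /b4 (FC h e) ctr1 mulmx1 mulmxV // ctr1 //.
Qed.
Lemma FR3 (Y : 'M[F]_(n, m)) : a1 Y -> r = m -> a3 Y.
Proof. by move=> h e; rewrite /a3 (FR h e) ctr1. Qed.

Lemma Nd0 : N = 0 -> Nd = 0.
Proof. exact: Kd0 n2. Qed.
Lemma N0a2 (Y : 'M[F]_(n, m)) : N = 0 -> a2 Y -> Y = 0.
Proof. by move=> e h; rewrite -h /a2 e mulmx0 mul0mx. Qed.
Lemma N0R : N = 0 -> RR.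
Proof. by move=> e; rewrite /RR /b4 e mulmx0 mulmx0 mul0mx ctr0. Qed.
Lemma N0r : N = 0 -> r != m /\ r != n.
Proof.
move=> e; rewrite e mxrank0; split; apply/eqP=> h.
  by move: hm; rewrite -h.
by move: hn; rewrite -h.
Qed.
Lemma N0all (Y : 'M[F]_(n, m)) : N = 0 -> a1 Y /\ a3 Y /\ a4 Y /\ b4 Y.
Proof.
move=> e; rewrite /a1 /a3 /a4 /b4 e; (repeat split); by rewrite ?mulmx0 ?mul0mx ?ctr0 ?mulmx0 ?mul0mx.
Qed.
Lemma rmin : r = minn m n <-> r = m \/ r = n.
Proof. have := rle_m; have := rle_n; lia. Qed.

Definition S124 (Y : 'M[F]_(n, m)) := a1 Y /\ a2 Y /\ a4 Y.
Definition S1 (Y : 'M[F]_(n, m)) := a1 Y.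
Definition S12 (Y : 'M[F]_(n, m)) := a1 Y /\ a2 Y.
Definition S13 (Y : 'M[F]_(n, m)) := a1 Y /\ a3 Y.
Definition S14 (Y : 'M[F]_(n, m)) := a1 Y /\ b4 Y.
Definition S123 (Y : 'M[F]_(n, m)) := a1 Y /\ a2 Y /\ a3 Y.
Definition S124b (Y : 'M[F]_(n, m)) := a1 Y /\ a2 Y /\ b4 Y.
Definition S134 (Y : 'M[F]_(n, m)) := a1 Y /\ a3 Y /\ b4 Y.

Lemma S124Nd : S124 Nd. Proof. by split; [|split]. Qed.

Lemma CEn : r != n -> exists Y, a1 Y /\ a3 Y /\ ~ S124 Y /\ (N = 0 \/ a2 Y).
Proof.
move=> nn; case: (eqVneq N 0) => [e|nz].
  have [nm _] := N0r e.
  have [Y [h1 [h3 [_ h2]]]] := CE_a2 n1 n2 n3 nm nn.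
  by exists Y; split=> //; split=> //; split; [move=> [_ [h _]] | left].
have [Y [h1 [h2 [h3 h4]]]] := CE_a4 n1 n2 n3 nz nn.
by exists Y; split=> //; split=> //; split=> [[_ [_ h]]|]; [exact: h4 | right].
Qed.

Lemma CEm : N != 0 -> r != m -> exists Y, S124 Y /\ ~ a3 Y.
Proof.
move=> nz nm; have [Y [h1 [h2 [h4 h3]]]] := CE_a3 n1 n2 n4 nz nm.
by exists Y.
Qed.

Lemma CEmn : RR -> r != m -> r != n -> exists Y, a1 Y /\ a3 Y /\ b4 Y /\ ~ a2 Y.
Proof.
move=> R nm nn; have [Y [h1 [h3 [e h2]]]] := CE_a2 n1 n2 n3 nm nn.
by exists Y; do !split=> //; apply: b4_YN.
Qed.

Lemma p41 : msubset S124 S1 /\ (msubset S1 S124 <-> mseteq S124 S1)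
  /\ (mseteq S124 S1 <-> r = n).
Proof.
split; first by move=> Y [].
split; first by split=> [h Y|h Y]; [split=> [[]//|]; exact: h | rewrite -h].
split=> [h|e Y]; last first.
  split=> [[]//|h1]; split=> //; split; [apply: a2_of h1 _; by left | exact: (FC4 h1 e).1].
apply/eqP; apply/negP => /negP nn.
have [Y [h1 [_ [hnS _]]]] := CEn nn.
by apply: hnS; apply/h.
Qed.

Lemma p42 : msubset S124 S12 /\ (msubset S12 S124 <-> mseteq S124 S12)
  /\ (mseteq S124 S12 <-> N = 0 \/ r = n).
Proof.
split; first by move=> Y [h1 [h2 _]].
split; first by split=> [h Y|h Y]; [split=> [[h1 [h2 _]]//|]; exact: h | rewrite -h].
split=> [h|h Y]; last first.
  split=> [[h1 [h2 _]]//|[h1 h2]]; split=> //; split=> //.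
  case: h => [e|e]; last exact: (FC4 h1 e).1.
  by rewrite (N0a2 e h2); have [_ [_ [h4 _]]] := N0all 0 e.
case: (eqVneq N 0) => [e|nz]; first by left.
right; apply/eqP; apply/negP => /negP nn.
have [Y [h1 [h3 [hnS [e|h2]]]]] := CEn nn; first by rewrite e eqxx in nz.
by apply: hnS; apply/h.
Qed.

Lemma sub_m124_3 : msubset S124 S13 <-> N = 0 \/ r = m.
Proof.
split=> [h|h Y [h1 [h2 h4]]]; last first.
  split=> //; case: h => [e|e]; [exact: (N0all Y e).2.1 | exact: FR3].
case: (eqVneq N 0) => [e|nz]; first by left.
right; apply/eqP; apply/negP => /negP nm.
have [Y [hY h3]] := CEm nz nm.
by apply: h3; case: (h Y hY).
Qed.

Lemma p43 : mmeets S124 S13 /\ (msubset S13 S124 <-> r = n)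
  /\ (msubset S124 S13 <-> N = 0 \/ r = m) /\ (mseteq S124 S13 <-> r = m /\ m = n).
Proof.
have s31 : msubset S13 S124 <-> r = n.
  split=> [h|e Y [h1 h3]]; last first.
    split=> //; split; [apply: a2_of h1 _; by left | exact: (FC4 h1 e).1].
  apply/eqP; apply/negP => /negP nn.
  have [Y [h1 [h3 [hnS _]]]] := CEn nn.
  by apply: hnS; apply: h.
split; first by exists Nd; split; [exact: S124Nd | split].
split; first exact: s31.
split; first exact: sub_m124_3.
split=> [h|[e1 e2]].
  have e1 : r = n by apply: (proj1 s31) => Y hY; apply/h.
  have : N = 0 \/ r = m by apply: (proj1 sub_m124_3) => Y hY; apply/h.
  case=> [e|e2]; last by split=> //; rewrite -e2.
  by have [_ /eqP] := N0r e.
have e3 : r = n by rewrite e1.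
move=> Y; split; [apply: (proj2 sub_m124_3); by right | apply: (proj2 s31 e3)].
Qed.

Lemma S124_0 : N = 0 -> S124 0.
Proof. by move=> e; rewrite /S124 /a1 /a2 /a4 e; (repeat split); rewrite ?mulmx0 ?mul0mx ?ctr0. Qed.

Lemma sub124_14 : msubset S124 S14 <-> RR.
Proof.
split=> [h|R Y [h1 [h2 h4]]]; first by case: (h Nd S124Nd).
by split=> //; apply: b4_YN (G1N h1 h4) R.
Qed.

Lemma meetR (Y : 'M[F]_(n, m)) : S124 Y -> b4 Y -> RR.
Proof. by move=> [h1 [h2 h4]] hb; rewrite /RR /b4 -(G1N h1 h4). Qed.

Lemma S14Y0 : S14 Y0. Proof. by split; [exact: a1Y0 | exact: b4Y0]. Qed.
Lemma S134Y0 : S134 Y0. Proof. by split; [exact: a1Y0 | split; [exact: a3Y0 | exact: b4Y0]]. Qed.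

Lemma swapor (P Q : Prop) : P \/ Q -> Q \/ P.
Proof. by case; [right|left]. Qed.

Lemma p44 : (mmeets S124 S14 <-> msubset S124 S14) /\ (msubset S124 S14 <-> RR)
  /\ (msubset S14 S124 <-> mseteq S124 S14) /\ (mseteq S124 S14 <-> RR /\ r = minn m n).
Proof.
have s14R : msubset S14 S124 -> RR by move=> h; apply/m124Y0; apply: h S14Y0.
split.
  split=> [[Y [hY [_ hb]]]|h]; first by apply/sub124_14; exact: meetR hY hb.
  by exists Nd; split; [exact: S124Nd | apply: h S124Nd].
split; first exact: sub124_14.
split.
  split=> [h Y|h Y /h //]; split; [exact: (proj2 sub124_14 (s14R h)) | exact: h].
split=> [h|[R hr] Y].
  have R : RR by apply: s14R => Y /h.
  split=> //; apply/rmin.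
  case: (eqVneq r m) => [|nm]; first by left.
  case: (eqVneq r n) => [|nn]; first by right.
  have [Y [h1 [h3 [hb h2]]]] := CEmn R nm nn.
  by case: (proj2 (h Y) (conj h1 hb)) => _ [].
split; first exact: (proj2 sub124_14 R).
move=> [h1 hb]; have e := uniqR R h1 hb.
split=> //; split; [apply: a2_of h1 _; apply: swapor; exact/rmin | exact: a4_YN e].
Qed.

Lemma p45 : mmeets S124 S123 /\ (msubset S123 S124 <-> N = 0 \/ r = n)
  /\ (msubset S124 S123 <-> N = 0 \/ r = m) /\ (mseteq S124 S123 <-> N = 0 \/ (r = m /\ m = n)).
Proof.
have s2 : msubset S123 S124 <-> N = 0 \/ r = n.
  split=> [h|[e|e] Y [h1 [h2 h3]]].
  - case: (eqVneq N 0) => [e|nz]; first by left.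
    right; apply/eqP; apply/negP => /negP nn.
    have [Y [h1 [h3 [hnS [e|h2]]]]] := CEn nn; first by rewrite e eqxx in nz.
    by apply: hnS; apply: h.
  - by rewrite (N0a2 e h2); exact: S124_0.
  - by split=> //; split=> //; exact: (FC4 h1 e).1.
have s3 : msubset S124 S123 <-> N = 0 \/ r = m.
  split=> [h|h Y hY].
    apply: (proj1 sub_m124_3) => Y hY; case: (h Y hY) => [h1 [_ h3]]; by split.
  have [h1 h3] := proj2 sub_m124_3 h Y hY; case: hY => [_ [h2 _]]; by split.
split; first by exists Nd; split; [exact: S124Nd | split].
split; first exact: s2.
split; first exact: s3.
split=> [h|h].
  have := proj1 s2 (fun Y hY => proj2 (h Y) hY).
  have := proj1 s3 (fun Y hY => proj1 (h Y) hY).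
  case=> [e|e1]; first by left.
  case=> [e|e2]; first by left.
  by right; split=> //; rewrite -e1.
have h2 : N = 0 \/ r = n by case: h => [e|[e1 e2]]; [left | right; rewrite e1].
have h3 : N = 0 \/ r = m by case: h => [e|[e1 e2]]; [left | right].
by move=> Y; split; [apply: (proj2 s3 h3) | apply: (proj2 s2 h2)].
Qed.

Lemma eqR124 : RR -> mseteq S124 S124b.
Proof.
move=> R Y; split=> [[h1 [h2 h4]]|[h1 [h2 hb]]].
  by split=> //; split=> //; apply: b4_YN (G1N h1 h4) R.
by split=> //; split=> //; apply: a4_YN (uniqR R h1 hb).
Qed.

Lemma p46 : (mmeets S124 S124b <-> mseteq S124 S124b) /\ (mseteq S124 S124b <-> RR).
Proof.
split.
  split=> [[Y [hY [_ [_ hb]]]]|h]; first exact: eqR124 (meetR hY hb).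
  by exists Nd; split; [exact: S124Nd | apply/h; exact: S124Nd].
split=> [h|]; last exact: eqR124.
by case: (proj1 (h Nd) S124Nd) => _ [].
Qed.

Lemma p47 : (mmeets S124 S134 <-> RR) /\ (msubset S134 S124 <-> RR /\ r = minn m n)
  /\ (msubset S124 S134 <-> N = 0 \/ (RR /\ r = m)) /\ (mseteq S124 S134 <-> RR /\ r = m).
Proof.
have s1 : msubset S134 S124 <-> RR /\ r = minn m n.
  split=> [h|[R hr] Y [h1 [h3 hb]]].
    have R : RR by apply/m124Y0; apply: h S134Y0.
    split=> //; apply/rmin.
    case: (eqVneq r m) => [|nm]; first by left.
    case: (eqVneq r n) => [|nn]; first by right.
    have [Y [h1 [h3 [hb h2]]]] := CEmn R nm nn.
    by case: (h Y (conj h1 (conj h3 hb))) => _ [].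
  have e := uniqR R h1 hb.
  split=> //; split; [apply: a2_of h1 _; apply: swapor; exact/rmin | exact: a4_YN e].
have s2 : msubset S124 S134 <-> N = 0 \/ (RR /\ r = m).
  split=> [h|[e|[R e]] Y hY].
  - case: (eqVneq N 0) => [e|nz]; first by left.
    right; split; first by case: (h Nd S124Nd) => _ [].
    apply/eqP; apply/negP => /negP nm.
    have [Y [hY h3]] := CEm nz nm.
    by apply: h3; case: (h Y hY) => _ [].
  - by have [h1 [h3 [_ hb]]] := N0all Y e; split.
  - case: hY => [h1 [h2 h4]]; split=> //; split; first exact: FR3.
    exact: b4_YN (G1N h1 h4) R.
split.
  split=> [[Y [hY [_ [_ hb]]]]|R]; first exact: meetR hY hb.
  by exists Nd; split; [exact: S124Nd | split; [|split]].
split; first exact: s1.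
split; first exact: s2.
split=> [h|[R e]].
  have [R hr] := proj1 s1 (fun Y hY => proj2 (h Y) hY).
  case: (proj1 s2 (fun Y hY => proj1 (h Y) hY)) => [e|[_ e]]; last by [].
  have [nm nn] := N0r e.
  by case: (proj1 rmin hr) => ee; [rewrite ee eqxx in nm | rewrite ee eqxx in nn].
have hs1 := proj2 s1 (conj R (proj2 rmin (or_introl e))).
have hs2 := proj2 s2 (or_intror (conj R e)).
by move=> Y; split; [apply: hs2 | apply: hs1].
Qed.

End Main.

Section Conv.
Variable F : numClosedFieldType.
Variables (n m : nat) (A : 'M[F]_m).
Hypothesis hA : A \in unitmx.
Variables (S T S' T' : 'M[F]_(n, m) -> Prop).
Hypotheses (hS : forall H, S H <-> S' (H *m A)) (hT : forall H, T H <-> T' (H *m A)).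

Lemma conv_sub : msubset S T <-> msubset S' T'.
Proof.
split=> h Y hY.
  have e : Y *m invmx A *m A = Y by rewrite mulmxKV.
  by rewrite -e; apply/hT; apply: h; apply/hS; rewrite e.
by apply/hT; apply: h; apply/hS.
Qed.

Lemma conv_eq : mseteq S T <-> mseteq S' T'.
Proof.
split=> h Y.
  have e : Y *m invmx A *m A = Y by rewrite mulmxKV.
  by rewrite -e -hS -hT.
by rewrite hS hT.
Qed.

Lemma conv_meet : mmeets S T <-> mmeets S' T'.
Proof.
split=> [[Y [h1 h2]]|[Y [h1 h2]]].
  by exists (Y *m A); split; [apply/hS | apply/hT].
have e : Y *m invmx A *m A = Y by rewrite mulmxKV.
by exists (Y *m invmx A); split; [apply/hS | apply/hT]; rewrite e.
Qed.
End Conv.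

Section Gl.
Variable F : numClosedFieldType.
Variables (p q : nat) (X : 'M[F]_(p, q)) (G : 'M[F]_(q, p)).
Lemma ginv1 i : ginv [:: i] X G <-> penrose i X G.
Proof.
split=> [h|h j]; first by apply: h; rewrite inE.
by rewrite inE => /eqP ->.
Qed.
Lemma ginv2 i j : ginv [:: i; j] X G <-> penrose i X G /\ penrose j X G.
Proof.
split=> [h|[h1 h2] k]; first by split; apply: h; rewrite !inE eqxx ?orbT.
by rewrite !inE => /orP [] /eqP ->.
Qed.
Lemma ginv3 i j k : ginv [:: i; j; k] X G <-> penrose i X G /\ penrose j X G /\ penrose k X G.
Proof.
split=> [h|[h1 [h2 h3]] l]; first by split; [|split]; apply: h; rewrite !inE eqxx ?orbT.
by rewrite !inE => /or3P [] /eqP ->.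
Qed.
End Gl.

Section Tr.
Variable F : numClosedFieldType.
Variables (m n : nat) (A : 'M[F]_m) (B : 'M[F]_(m, n)) (C : 'M[F]_n).
Hypotheses (hA : A \in unitmx) (hC : C \in unitmx).

Lemma pM1 H : penrose 1 (A *m B *m C) H <-> a1 B C (H *m A).
Proof.
rewrite /= /a1; split=> h.
  by apply: (cancel_l hA); move: h; rewrite !mulmxA.
by move: (congr1 (mulmx A) h); rewrite !mulmxA.
Qed.
Lemma pM2 H : penrose 2 (A *m B *m C) H <-> a2 B C (H *m A).
Proof.
rewrite /= /a2; split=> h.
  by move: (congr1 (mulmx^~ A) h); rewrite !mulmxA.
by apply: (cancel_r hA); move: h; rewrite !mulmxA.
Qed.
Lemma pM4 H : penrose 4 (A *m B *m C) H <-> a4 B C (H *m A).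
Proof.
rewrite /= /a4.
by have -> : H *m (A *m B *m C) = H *m A *m (B *m C) by rewrite !mulmxA.
Qed.
Lemma pB1 Y : penrose 1 B (C *m Y) <-> a1 B C Y.
Proof.
split=> h; last first. rewrite /=. exact: (@a1B F m n B C hC Y h).
by move: (congr1 (mulmx^~ C) h) => /=; rewrite /a1 !mulmxA.
Qed.
Lemma pB2 Y : penrose 2 B (C *m Y) <-> a2 B C Y.
Proof.
rewrite /= /a2; split=> h.
  by apply: (cancel_l hC); move: h; rewrite !mulmxA.
by move: (congr1 (mulmx C) h); rewrite !mulmxA.
Qed.
Lemma pB3 Y : penrose 3 B (C *m Y) <-> a3 B C Y.
Proof. by rewrite /= /a3 mulmxA. Qed.
Lemma pB4 Y : penrose 4 B (C *m Y) <-> b4 B C Y.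
Proof.
rewrite /= /b4.
by have -> : C *m (Y *m (B *m C)) *m invmx C = C *m Y *m B by rewrite !mulmxA (mulmxK hC).
Qed.
Lemma tsetE t H : tset t A B C H <-> ginv t B (C *m (H *m A)).
Proof.
split=> [[G [hG ->]]|h].
  by rewrite !mulmxA (mulmxKV hA) mulmxV // mul1mx.
exists (C *m (H *m A)); split=> //.
by rewrite !mulmxA mulVmx // mul1mx (mulmxK hA).
Qed.

Lemma hM H : ginv [:: 1; 2; 4]%N (A *m B *m C) H <-> S124 B C (H *m A).
Proof. by rewrite ginv3 pM1 pM2 pM4. Qed.
Lemma hT1 H : tset [:: 1]%N A B C H <-> S1 B C (H *m A).
Proof. by rewrite tsetE ginv1 pB1. Qed.
Lemma hT12 H : tset [:: 1; 2]%N A B C H <-> S12 B C (H *m A).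
Proof. by rewrite tsetE ginv2 pB1 pB2. Qed.
Lemma hT13 H : tset [:: 1; 3]%N A B C H <-> S13 B C (H *m A).
Proof. by rewrite tsetE ginv2 pB1 pB3. Qed.
Lemma hT14 H : tset [:: 1; 4]%N A B C H <-> S14 B C (H *m A).
Proof. by rewrite tsetE ginv2 pB1 pB4. Qed.
Lemma hT123 H : tset [:: 1; 2; 3]%N A B C H <-> S123 B C (H *m A).
Proof. by rewrite tsetE ginv3 pB1 pB2 pB3. Qed.
Lemma hT124 H : tset [:: 1; 2; 4]%N A B C H <-> S124b B C (H *m A).
Proof. by rewrite tsetE ginv3 pB1 pB2 pB4. Qed.
Lemma hT134 H : tset [:: 1; 3; 4]%N A B C H <-> S134 B C (H *m A).
Proof. by rewrite tsetE ginv3 pB1 pB3 pB4. Qed.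
End Tr.

Theorem theorem4p2 (F : numClosedFieldType) (m n : nat)
  (hm : (1 <= m)%N) (hn : (1 <= n)%N)
  (A : 'M[F]_m) (B : 'M[F]_(m, n)) (C : 'M[F]_n)
  (hA : A \in unitmx) (hC : C \in unitmx) :
  let M := A *m B *m C in
  let M124 := ginv [:: 1; 2; 4]%N M in
  let T t := tset t A B C in
  let R2 := colspace_eq (C *m ctr C *m ctr B) (ctr B) in
  (* (41) *)
  (msubset M124 (T [:: 1]%N)
   /\ (msubset (T [:: 1]%N) M124 <-> mseteq M124 (T [:: 1]%N))
   /\ (mseteq M124 (T [:: 1]%N) <-> \rank B = n))
  (* (42) *)
  /\ (msubset M124 (T [:: 1; 2]%N)
   /\ (msubset (T [:: 1; 2]%N) M124 <-> mseteq M124 (T [:: 1; 2]%N))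
   /\ (mseteq M124 (T [:: 1; 2]%N) <-> B = 0 \/ \rank B = n))
  (* (43) *)
  /\ (mmeets M124 (T [:: 1; 3]%N)
   /\ (msubset (T [:: 1; 3]%N) M124 <-> \rank B = n)
   /\ (msubset M124 (T [:: 1; 3]%N) <-> B = 0 \/ \rank B = m)
   /\ (mseteq M124 (T [:: 1; 3]%N) <-> \rank B = m /\ m = n))
  (* (44) *)
  /\ ((mmeets M124 (T [:: 1; 4]%N) <-> msubset M124 (T [:: 1; 4]%N))
   /\ (msubset M124 (T [:: 1; 4]%N) <-> R2)
   /\ (msubset (T [:: 1; 4]%N) M124 <-> mseteq M124 (T [:: 1; 4]%N))
   /\ (mseteq M124 (T [:: 1; 4]%N) <-> R2 /\ \rank B = minn m n))
  (* (45) *)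
  /\ (mmeets M124 (T [:: 1; 2; 3]%N)
   /\ (msubset (T [:: 1; 2; 3]%N) M124 <-> B = 0 \/ \rank B = n)
   /\ (msubset M124 (T [:: 1; 2; 3]%N) <-> B = 0 \/ \rank B = m)
   /\ (mseteq M124 (T [:: 1; 2; 3]%N) <-> B = 0 \/ (\rank B = m /\ m = n)))
  (* (46) *)
  /\ ((mmeets M124 (T [:: 1; 2; 4]%N) <-> mseteq M124 (T [:: 1; 2; 4]%N))
   /\ (mseteq M124 (T [:: 1; 2; 4]%N) <-> R2))
  (* (47) *)
  /\ ((mmeets M124 (T [:: 1; 3; 4]%N) <-> R2)
   /\ (msubset (T [:: 1; 3; 4]%N) M124 <-> R2 /\ \rank B = minn m n)
   /\ (msubset M124 (T [:: 1; 3; 4]%N) <-> B = 0 \/ (R2 /\ \rank B = m))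
   /\ (mseteq M124 (T [:: 1; 3; 4]%N) <-> R2 /\ \rank B = m))
  (* (48) *)
  /\ (M124 (invmx C *m mpinv B *m invmx A) <-> R2).
Proof.
move=> M M124 T R2; rewrite /M124 /T /R2 /M.
have [Nd hNd] := mp_exists (B *m C).
have hBd := mpinvP B.
have n1 : B *m C *m Nd *m (B *m C) = B *m C by apply: (hNd 1%N).
have n2 : Nd *m (B *m C) *m Nd = Nd by apply: (hNd 2%N).
have n3 : ctr (B *m C *m Nd) = B *m C *m Nd by apply: (hNd 3%N).
have n4 : ctr (Nd *m (B *m C)) = Nd *m (B *m C) by apply: (hNd 4%N).
have b1 : B *m mpinv B *m B = B by apply: (hBd 1%N).
have b2 : mpinv B *m B *m mpinv B = mpinv B by apply: (hBd 2%N).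
have b3 : ctr (B *m mpinv B) = B *m mpinv B by apply: (hBd 3%N).
have b4' : ctr (mpinv B *m B) = mpinv B *m B by apply: (hBd 4%N).
have hM' := hM B C hA.
rewrite (conv_sub hA hM' (hT1 B hA hC)) (conv_sub hA (hT1 B hA hC) hM') (conv_eq hA hM' (hT1 B hA hC)).
rewrite (conv_sub hA hM' (hT12 B hA hC)) (conv_sub hA (hT12 B hA hC) hM') (conv_eq hA hM' (hT12 B hA hC)).
rewrite (conv_sub hA hM' (hT13 B hA hC)) (conv_sub hA (hT13 B hA hC) hM') (conv_eq hA hM' (hT13 B hA hC)) (conv_meet hA hM' (hT13 B hA hC)).
rewrite (conv_sub hA hM' (hT14 B hA hC)) (conv_sub hA (hT14 B hA hC) hM') (conv_eq hA hM' (hT14 B hA hC)) (conv_meet hA hM' (hT14 B hA hC)).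
rewrite (conv_sub hA hM' (hT123 B hA hC)) (conv_sub hA (hT123 B hA hC) hM') (conv_eq hA hM' (hT123 B hA hC)) (conv_meet hA hM' (hT123 B hA hC)).
rewrite (conv_eq hA hM' (hT124 B hA hC)) (conv_meet hA hM' (hT124 B hA hC)).
rewrite (conv_sub hA hM' (hT134 B hA hC)) (conv_sub hA (hT134 B hA hC) hM') (conv_eq hA hM' (hT134 B hA hC)) (conv_meet hA hM' (hT134 B hA hC)).
rewrite hM' (mulmxKV hA).
rewrite -(rankN B hC) -(N0E B hC) (R2R hC n1 n4 b1 b4').
split; first exact: (p41 hm hn hC n1 n2 n3).
split; first exact: (p42 hm hn hC n1 n2 n3).
split; first exact: (p43 hm hn hC n1 n2 n3 n4).
split; first exact: (p44 hm hn hA hC n1 n2 n3 n4 b1 b2 b4').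
split; first exact: (p45 hm hn hC n1 n2 n3 n4).
split; first exact: (p46 hC n1 n2 n4 b1 b4').
split; first exact: (p47 hm hn hA hC n1 n2 n3 n4 b1 b2 b3 b4').
exact: (m124Y0 hC n1 n4 b1 b2 b4').
Qed.
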